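(* Let $W$ be a finite set of possible worlds, let $G=(2^W,\gg)$ be a belief algebra on $W$, let $\Omega\subseteq\gg$, and let $\mathcal{A}$ be the set of all belief algebras on $W$ that contain $\Omega$. Then $\operatorname{Gen}(\Omega)$ is a belief algebra, and $\operatorname{Gen}(\Omega)=\bigcap\mathcal{A}$.
   Context: $R_W=\{(U,V)\mid U,V\subseteq W,\ U\cap V=\varnothing\}$. A belief algebra on $W$ is a pair $(2^W,\gg)$, $\gg$ a binary relation on $2^W$, such that for all $U,V,U_1,V_1,U_2,V_2\subseteq W$: (A0) $\gg\subseteq R_W$; (A1) $U\gg\varnothing$ iff $U\neq\varnothing$; (A2) if $U\gg V$ then not $V\gg U$; (A3) if $U_1\supseteq U$, $U\gg V$, $V\supseteq V_1$ and $U_1\cap V_1=\varnothing$, then $U_1\gg V_1$; (A4) if $U=U_1\cup V_1=U_2\cup V_2$, $U_1\gg V_1$ and $U_2\gg V_2$, then $U_1\cap U_2\gg V_1\cup V_2$. A belief algebra is identified with its relation $\gg$ as a set of pairs; ''contains $\Omega$'' means $\Omega\subseteq\gg$, and $\bigcap\mathcal{A}$ is the intersection of these sets of pairs. For $\Omega\subseteq R_W$, $\operatorname{Gen}(\Omega)$ is the smallest subset of $R_W$ that contains $\Omega$, contains $(U,\varnothing)$ for every nonempty $U\subseteq W$, and is closed under: if $(U,V)$ is in it, $U\subseteq U_1$, $V_1\subseteq V$ and $U_1\cap V_1=\varnothing$, then $(U_1,V_1)$ is in it; if $U_1\cup V_1=U_2\cup V_2$ and $(U_1,V_1),(U_2,V_2)$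 are in it, then $(U_1\cap U_2,V_1\cup V_2)$ is in it. *)

(* Defs.v *)
From mathcomp Require Import all_boot.
Set Implicit Arguments. Unset Strict Implicit. Unset Printing Implicit Defensive.

Definition brel (W : finType) := {set W} -> {set W} -> Prop.

Definition RW (W : finType) : brel W := fun U V => U :&: V = set0.

Definition sub_brel (W : finType) (r s : brel W) : Prop :=
  forall U V, r U V -> s U V.

Definition belief_algebra (W : finType) (gg : brel W) : Prop :=
  [/\ sub_brel gg (@RW W),
      (forall U : {set W}, gg U set0 <-> U <> set0),
      (forall U V, gg U V -> ~ gg V U),
      (forall U V U1 V1 : {set W},
                  U \subset U1 -> gg U V -> V1 \subset V -> U1 :&: V1 = set0 ->
                  gg U1 V1)
    & (forall U U1 V1 U2 V2 : {set W},
                  U = U1 :|: V1 -> U = U2 :|: V2 -> gg U1 V1 -> gg U2 V2 ->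
                  gg (U1 :&: U2) (V1 :|: V2))].

Inductive Gen (W : finType) (Om : brel W) : brel W :=
| Gen_base : forall U V, Om U V -> Gen Om U V
| Gen_empty : forall U : {set W}, U <> set0 -> Gen Om U set0
| Gen_mono : forall U V U1 V1 : {set W},
    Gen Om U V -> U \subset U1 -> V1 \subset V -> U1 :&: V1 = set0 ->
    Gen Om U1 V1
| Gen_meet : forall U1 V1 U2 V2 : {set W},
    U1 :|: V1 = U2 :|: V2 -> Gen Om U1 V1 -> Gen Om U2 V2 ->
    Gen Om (U1 :&: U2) (V1 :|: V2).

Definition bigcap_A (W : finType) (Om : brel W) : brel W :=
  fun U V => forall gg : brel W, belief_algebra gg -> sub_brel Om gg -> gg U V.

(* Main.v *)
Require Import Defs.
From mathcomp Require Import all_boot.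

Lemma Gen_sub (W : finType) (gg Om : brel W) :
  belief_algebra gg -> sub_brel Om gg -> sub_brel (Gen Om) gg.
Proof.
move=> [A0 A1 A2 A3 A4] HO U V H; elim: H.
- by move=> ? ? /HO.
- by move=> U0 /A1.
- move=> U0 V0 U1 V1 _ IH s1 s2 e; exact: (A3 U0 V0).
- move=> U1 V1 U2 V2 e _ IH1 _ IH2; exact: (A4 (U1 :|: V1)).
Qed.

Theorem corollary2 (W : finType) (gg Om : brel W) :
  belief_algebra gg -> sub_brel Om gg ->
  belief_algebra (Gen Om) /\ (forall U V, Gen Om U V <-> bigcap_A Om U V).
Proof.
move=> Hb HO.
have Hs := @Gen_sub W gg Om Hb HO.

have BA : belief_algebra (Gen Om).
  case: Hb => [A0 A1 A2 A3 A4]; split.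
  - by move=> U V /Hs /A0.
  - move=> U; split; first by move=> /Hs /A1.
    exact: Gen_empty.
  - by move=> U V /Hs H1 /Hs H2; apply: (A2 U V).
  - move=> U V U1 V1 s1 H s2 e; exact: (Gen_mono H s1 s2 e).
  - move=> U U1 V1 U2 V2 e1 e2 H1 H2; apply: Gen_meet => //.
    by rewrite -e1 -e2.
split => // U V; split.
- move=> H g Hg HOg; exact: (@Gen_sub W g Om Hg HOg).
- move=> H; apply: H => //; exact: Gen_base.
Qed.
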